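(* Let $N\in\mathbb{N}$ with $N\ge3$, let $n\in\mathbb{N}$ with $n\ge17$, and let $x\in\mathbb{R}$ with $|x|\le n^{-\frac18}$. Put \[ y:=\frac{\pi\sqrt{24n+1}}{3\sqrt2}\sum_{m=2}^{2N+5}(-1)^m\binom{\frac12}{m}x^{2m}. \] Then there are real numbers $E_1,E_2$ with $|E_1|\le\frac{0.7^{N+2}}{(N+2)!}x^{4N+8}n^{\frac{N+2}{2}}$ and $|E_2|\le 0.4\,n^{-\frac{N+2}{2}}$ such that \[ e^{\frac{\pi}{3\sqrt2}\sqrt{(1-x^2)(24n+1)}}=e^{\frac{\pi\sqrt{24n+1}}{3\sqrt2}\left(1-\frac{x^2}{2}\right)}\left(\sum_{j=0}^{N+1}\frac{y^j}{j!}+E_1\right)(1+E_2). \] *)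

(* Defs.v *)
From Stdlib Require Import Reals Lra Arith Factorial.
Open Scope R_scope.

Fixpoint falling (a : R) (m : nat) : R :=
  match m with
  | O => 1
  | S k => falling a k * (a - INR k)
  end.

Definition gbinom (a : R) (m : nat) : R := falling a m / INR (fact m).

(* sum_{m = lo}^{hi} f m  (empty if hi < lo) *)
Fixpoint sum_range_aux (f : nat -> R) (lo : nat) (len : nat) : R :=
  match len with
  | O => 0
  | S k => sum_range_aux f lo k + f (lo + k)%nat
  end.

Definition sum_range (f : nat -> R) (lo hi : nat) : R :=
  sum_range_aux f lo (S hi - lo).

(* Main.v *)
Require Import Defs.
From Stdlib Require Import Reals Lra Lia Factorial.
From Coquelicot Require Coquelicot.
Open Scope R_scope.

Definition d (m : nat) : R := (-1) ^ m * gbinom (1/2) m.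

Lemma d_S m : d (S m) * (INR m + 1) = d m * (INR m - 1/2).
Proof.
  unfold d, gbinom. cbn [falling pow]. rewrite fact_simpl, mult_INR, S_INR.
  pose proof (INR_fact_neq_0 m). pose proof (pos_INR m). field. lra.
Qed.

Lemma d_0 : d 0 = 1.
Proof. unfold d, gbinom; simpl; field. Qed.
Lemma d_1 : d 1 = -(1/2).
Proof. unfold d, gbinom; simpl; field. Qed.

Lemma d_rec m : d (S m) = d m * (INR m - 1/2) / (INR m + 1).
Proof. pose proof (pos_INR m). rewrite <- d_S. field. lra. Qed.

Lemma d_le m : (1 <= m)%nat -> d m <= 0.
Proof.
  induction 1. rewrite d_1; lra.
  rewrite d_rec. pose proof (pos_INR m). assert (1 <= INR m) by (apply (le_INR 1); lia).
  assert (0 <= (INR m - 1/2) / (INR m + 1)).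
  { unfold Rdiv. apply Rmult_le_pos. lra. left; apply Rinv_0_lt_compat; lra. }
  unfold Rdiv in *. rewrite Rmult_assoc. nra.
Qed.

Lemma d_4 : d 4 = -(5/128).
Proof. unfold d, gbinom; simpl; field. Qed.

Lemma d_ge m : (4 <= m)%nat -> -(5/128) <= d m.
Proof.
  induction 1. rewrite d_4; lra.
  rewrite d_rec. pose proof (d_le m ltac:(lia)). assert (4 <= INR m) by (replace 4 with (INR 4) by (simpl; ring); apply le_INR; lia).
  intros. apply Rle_trans with (d m); auto.
  apply Rmult_le_reg_r with (INR m + 1). lra.
  unfold Rdiv. rewrite Rmult_assoc, Rinv_l by lra. nra.
Qed.

Definition Q (M : nat) (u : R) := sum_f_R0 (fun m => d m * u ^ m) M.
Definition P (M : nat) (u : R) := sum_f_R0 (fun m => d m * (INR m * u ^ pred m)) M.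

Lemma Q_deriv M u : derivable_pt_lim (Q M) u (P M u).
Proof.
  induction M.
  - unfold Q, P. simpl.
    apply (derivable_pt_lim_scal (fun y => y ^ 0) (d 0) u (INR 0 * u ^ pred 0)).
    apply derivable_pt_lim_pow.
  - unfold Q, P. cbn [sum_f_R0].
    apply (derivable_pt_lim_plus (Q M) (fun u => d (S M) * u ^ S M)); auto.
    apply (derivable_pt_lim_scal (fun y => y ^ S M) (d (S M)) u).
    apply derivable_pt_lim_pow.
Qed.

Lemma QP_id M u : 2 * (1 - u) * P M u + Q M u = - (2 * INR M - 1) * d M * u ^ M.
Proof.
  induction M.
  - unfold P, Q; simpl. rewrite d_0. ring.
  - unfold P, Q in *; cbn [sum_f_R0]. cbn [pred].
    pose proof (d_S M) as HS. rewrite S_INR.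
    replace (2 * (1 - u) * (sum_f_R0 (fun m : nat => d m * (INR m * u ^ Init.Nat.pred m)) M +
        d (S M) * ((INR M + 1) * u ^ M)) + (sum_f_R0 (fun m : nat => d m * u ^ m) M + d (S M) * u ^ S M))
    with ((2 * (1 - u) * sum_f_R0 (fun m : nat => d m * (INR m * u ^ Init.Nat.pred m)) M +
        sum_f_R0 (fun m : nat => d m * u ^ m) M) + 2 * (1-u) * (d (S M) * (INR M + 1)) * u ^ M + d (S M) * u ^ S M) by ring.
    rewrite IHM, HS. simpl. replace (-(2*INR M -1)*d M*u^M) with (-(2*(d M*(INR M - 1/2)))*u^M) by field. rewrite <- HS. ring.
Qed.

Definition Hf M K u := Q M u / sqrt (1 - u) - K * u ^ S M.

Lemma sqrt1m_deriv u : u < 1 -> derivable_pt_lim (fun u => sqrt (1 - u)) u ((0 - 1) * / (2 * sqrt (1 - u))).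
Proof.
  intros Hu.
  pose proof (derivable_pt_lim_minus (fun _ => 1) id u 0 1 (derivable_pt_lim_const 1 u) (derivable_pt_lim_id u)) as H1.
  pose proof (derivable_pt_lim_sqrt (1 - u) ltac:(lra)) as H2.
  pose proof (derivable_pt_lim_comp _ sqrt u _ _ H1 H2) as H3.
  rewrite Rmult_comm. exact H3.
Qed.

Lemma Hf_deriv M K u : u < 1 ->
  derivable_pt_lim (Hf M K) u
    (u ^ M * (- (2 * INR M - 1) * d M / (2 * sqrt (1 - u) * (1 - u)) - K * (INR M + 1))).
Proof.
  intros Hu.
  assert (Hs0 : 0 < sqrt (1 - u)) by (apply sqrt_lt_R0; lra).
  pose proof (derivable_pt_lim_div (Q M) (fun u => sqrt (1 - u)) u _ _ (Q_deriv M u) (sqrt1m_deriv u Hu) ltac:(lra)) as H1.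
  pose proof (derivable_pt_lim_scal (fun y => y ^ S M) K u _ (derivable_pt_lim_pow u (S M))) as H2.
  pose proof (derivable_pt_lim_minus _ _ u _ _ H1 H2) as H3.
  unfold Hf.
  match type of H3 with derivable_pt_lim _ _ ?l => replace (u ^ M * _) with l end.
  exact H3.
  pose proof (QP_id M u) as HQ.
  assert (Hss : sqrt (1 - u) * sqrt (1 - u) = 1 - u) by (apply sqrt_sqrt; lra).
  set (s := sqrt (1 - u)) in *. set (q := Q M u) in *. set (p := P M u) in *.
  cbn [pred]. rewrite S_INR.
  transitivity ((2*(1-u)*p+q)/(2*s*(1-u)) - K*((INR M+1)*u^M)).
  - rewrite <- Hss. unfold Rsqr. field. lra.
  - rewrite HQ. field. split; lra.
Qed.

Lemma Q0 M : Q M 0 = 1.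
Proof. induction M; unfold Q in *; simpl. rewrite d_0; ring. rewrite IHM; ring. Qed.

Lemma r_bounds M t : (1 <= M)%nat -> 0 <= t -> t <= 1/2 ->
  0 <= Q M t - sqrt (1 - t) <=
  - (2 * INR M - 1) * d M / (2 * (INR M + 1)) * t ^ S M / (1 - t).
Proof.
  intros HM ht0 ht.
  assert (HA : 0 <= - (2 * INR M - 1) * d M).
  { pose proof (d_le M HM). assert (1 <= INR M) by (apply (le_INR 1); lia). nra. }
  set (A := - (2 * INR M - 1) * d M) in *.
  assert (HMp : 0 < INR M + 1) by (pose proof (pos_INR M); lra).
  destruct ht0 as [ht0 | ht0].
  2:{ subst t. rewrite Q0. rewrite Rminus_0_r, sqrt_1. simpl. rewrite Rmult_0_l.
      unfold Rdiv. rewrite !Rmult_0_r, Rmult_0_l. lra. }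
  assert (Hst : 0 < sqrt (1 - t)) by (apply sqrt_lt_R0; lra).
  assert (Hss : sqrt (1 - t) * sqrt (1 - t) = 1 - t) by (apply sqrt_sqrt; lra).
  assert (H0 : forall K, Hf M K 0 = 1).
  { intros K. unfold Hf. rewrite Q0, Rminus_0_r, sqrt_1. simpl. field. }
  split.
  - destruct (MVT_cor2 (Hf M 0) (fun u => u ^ M * (A / (2 * sqrt (1 - u) * (1 - u)) - 0 * (INR M + 1))) 0 t ht0)
      as [c [Hc1 Hc2]].
    { intros c Hc. apply Hf_deriv. lra. }
    rewrite H0 in Hc1. unfold Hf in Hc1.
    assert (Hsc : 0 < sqrt (1 - c)) by (apply sqrt_lt_R0; lra).
    assert (0 <= c ^ M * (A / (2 * sqrt (1 - c) * (1 - c)) - 0 * (INR M + 1)) * (t - 0)).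
    { apply Rmult_le_pos; [|lra]. apply Rmult_le_pos. apply pow_le; lra.
      rewrite Rmult_0_l, Rminus_0_r. unfold Rdiv. apply Rmult_le_pos; auto.
      left. apply Rinv_0_lt_compat. apply Rmult_lt_0_compat; lra. }
    assert (1 <= Q M t / sqrt (1 - t)) by lra.
    apply Rmult_le_compat_r with (r := sqrt (1 - t)) in H1; [|lra].
    unfold Rdiv in H1. rewrite Rmult_assoc, Rinv_l in H1 by lra. lra.
  - set (K := A / (2 * (INR M + 1) * sqrt (1 - t) * (1 - t))).
    destruct (MVT_cor2 (Hf M K) (fun u => u ^ M * (A / (2 * sqrt (1 - u) * (1 - u)) - K * (INR M + 1))) 0 t ht0)
      as [c [Hc1 Hc2]].
    { intros c Hc. apply Hf_deriv. lra. }
    rewrite H0 in Hc1. unfold Hf in Hc1.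
    assert (Hsc : 0 < sqrt (1 - c)) by (apply sqrt_lt_R0; lra).
    assert (Hle : sqrt (1 - t) <= sqrt (1 - c)) by (apply sqrt_le_1_alt; lra).
    assert (A / (2 * sqrt (1 - c) * (1 - c)) <= K * (INR M + 1)).
    { replace (K * (INR M + 1)) with (A / (2 * sqrt (1 - t) * (1 - t))) by (unfold K; field; lra).
      unfold Rdiv. apply Rmult_le_compat_l; auto. apply Rinv_le_contravar.
      apply Rmult_lt_0_compat; lra.
      apply Rmult_le_compat; try lra. }
    assert (c ^ M * (A / (2 * sqrt (1 - c) * (1 - c)) - K * (INR M + 1)) * (t - 0) <= 0).
    { assert (0 <= c ^ M) by (apply pow_le; lra).
      set (D := A / (2 * sqrt (1 - c) * (1 - c)) - K * (INR M + 1)).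
      assert (0 <= c ^ M * - D) by (apply Rmult_le_pos; unfold D; lra). nra. }
    assert (Q M t / sqrt (1 - t) <= 1 + K * t ^ S M) by lra.
    apply Rmult_le_compat_r with (r := sqrt (1 - t)) in H2; [|lra].
    unfold Rdiv in H2. rewrite Rmult_assoc, Rinv_l in H2 by lra.
    apply Rle_trans with (Q M t * 1 - sqrt (1 - t)). lra.
    replace (A / (2 * (INR M + 1)) * t ^ S M / (1 - t)) with (K * t ^ S M * sqrt (1 - t)).
    rewrite Rmult_plus_distr_r in H2. lra. unfold K. field. split; lra.
Qed.
Module BB.
Import Coquelicot.

Lemma Dn_expm m : forall u, Derive_n (fun u => exp (- u)) m u = (-1) ^ m * exp (- u).
Proof.
  induction m; intros u. simpl. ring.
  simpl Derive_n. rewrite (Derive_ext _ (fun u => (-1) ^ m * exp (- u))) by exact IHm.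
  apply is_derive_unique. auto_derive. auto. simpl. ring.
Qed.

Lemma exDn_expm m u : ex_derive_n (fun u => exp (- u)) m u.
Proof.
  destruct m. simpl. auto. simpl.
  apply (ex_derive_ext (fun u => (-1) ^ m * exp (- u))). intros; symmetry; apply Dn_expm.
  auto_derive. auto.
Qed.

Lemma exp_rem k y : y <= 0 ->
  Rabs (exp y - sum_f_R0 (fun j => y ^ j / INR (fact j)) k) <= Rabs y ^ S k / INR (fact (S k)).
Proof.
  intros Hy. destruct Hy as [Hy|Hy].
  - destruct (Taylor_Lagrange (fun u => exp (- u)) k 0 (- y) ltac:(lra)) as [z [Hz Heq]].
    { intros; apply exDn_expm. }
    rewrite Ropp_involutive in Heq. rewrite Heq.
    rewrite (sum_eq _ (fun j => y ^ j / INR (fact j))).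
    2:{ intros i _. rewrite Dn_expm. rewrite Ropp_0, exp_0, Rminus_0_r.
        replace (-y) with ((-1) * y) by ring. rewrite Rpow_mult_distr. rewrite Rmult_1_r.
        replace ((-1)^i * y^i / INR (fact i) * (-1)^i) with (((-1)*(-1))^i * y^i / INR(fact i))
          by (rewrite Rpow_mult_distr; field; apply INR_fact_neq_0).
        replace ((-1)*(-1)) with 1 by ring. rewrite pow1. field. apply INR_fact_neq_0. }
    rewrite Dn_expm. replace (- y - 0) with (Rabs y) by (rewrite Rabs_left; lra).
    match goal with |- Rabs (?a + ?b - ?a) <= _ => replace (a + b - a) with b by ring end.
    rewrite !Rabs_mult. unfold Rdiv. rewrite Rabs_mult.
    rewrite (Rabs_right (Rabs y ^ S k)) by (apply Rle_ge, pow_le, Rabs_pos).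
    rewrite (Rabs_right (/ _)) by (apply Rle_ge; left; apply Rinv_0_lt_compat, INR_fact_lt_0).
    rewrite pow_1_abs, Rmult_1_l, (Rabs_right (exp _)) by (left; apply exp_pos).
    rewrite <- (Rmult_1_r (Rabs y ^ S k * / INR (fact (S k)))) at 2.
    apply Rmult_le_compat_l.
    apply Rmult_le_pos. apply pow_le, Rabs_pos. left; apply Rinv_0_lt_compat, INR_fact_lt_0.
    rewrite <- exp_0. left; apply exp_increasing; lra.
  - subst y. rewrite exp_0. replace (sum_f_R0 (fun j => 0 ^ j / INR (fact j)) k) with 1.
    rewrite Rabs_R0. simpl. rewrite Rmult_0_l. unfold Rdiv. rewrite Rmult_0_l, Rminus_diag, Rabs_R0. lra.
    induction k. simpl. field. cbn [sum_f_R0]. rewrite <- IHk. cbn [pow]. unfold Rdiv. rewrite !Rmult_0_l. ring.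
Qed.

End BB.

Lemma sra_aux (f : nat -> R) k : sum_range_aux f 2 k + f 0%nat + f 1%nat = sum_f_R0 f (S k).
Proof.
  induction k. simpl. ring. cbn [sum_range_aux]. cbn [sum_f_R0] in *. rewrite <- IHk.
  replace (2 + k)%nat with (S (S k)) by lia. ring.
Qed.

Lemma sra_nonpos (f : nat -> R) k : (forall m, (2 <= m)%nat -> f m <= 0) -> sum_range_aux f 2 k <= 0.
Proof.
  intros Hf. induction k. simpl; lra. cbn [sum_range_aux]. pose proof (Hf (2 + k)%nat ltac:(lia)). lra.
Qed.

Lemma PI_ub : PI <= 3467 / 1000.
Proof.
  destruct (PI_ineq 1) as [_ H]. unfold tg_alt, PI_tg in H. simpl in H. lra.
Qed.

Theorem lemma3p3 (N n : nat) (x : R)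
  (hN : (3 <= N)%nat) (hn : (17 <= n)%nat)
  (hx : Rabs x <= Rpower (INR n) (- (1/8))) :
  let c := PI * sqrt (24 * INR n + 1) / (3 * sqrt 2) in
  let y := c * sum_range (fun m => (-1) ^ m * gbinom (1/2) m * x ^ (2 * m)) 2 (2 * N + 5) in
  exists E1 E2 : R,
    Rabs E1 <= (7/10) ^ (N + 2) / INR (fact (N + 2)) * x ^ (4 * N + 8)
                 * Rpower (INR n) (INR (N + 2) / 2) /\
    Rabs E2 <= (4/10) * Rpower (INR n) (- (INR (N + 2) / 2)) /\
    exp (PI / (3 * sqrt 2) * sqrt ((1 - x ^ 2) * (24 * INR n + 1)))
      = exp (c * (1 - x ^ 2 / 2))
        * (sum_f_R0 (fun j => y ^ j / INR (fact j)) (N + 1) + E1) * (1 + E2).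
Proof.
  intros c y.
  set (nr := INR n) in *.
  assert (Hn : 17 <= nr) by (unfold nr; replace 17 with (INR 17) by (simpl; ring); apply le_INR; lia).
  set (sq := sqrt nr).
  assert (Hsq4 : 4 <= sq).
  { unfold sq. replace 4 with (sqrt (4 * 4)) by (apply sqrt_square; lra). apply sqrt_le_1_alt; lra. }
  assert (Hsqsq : sq * sq = nr) by (apply sqrt_sqrt; lra).
  assert (Hq : Rpower nr (- (1/2)) = / sq).
  { rewrite Rpower_Ropp. replace (1/2) with (/2) by field. rewrite Rpower_sqrt by lra. reflexivity. }
  assert (Hx4 : x ^ 4 <= / sq).
  { rewrite <- Hq.
    assert (Hp8 : 0 < Rpower nr (- (1/8))) by (unfold Rpower; apply exp_pos).
    replace (x ^ 4) with (Rabs x ^ 4) by (rewrite RPow_abs; apply Rabs_right; replace (x^4) with ((x^2)^2) by ring; apply Rle_ge, pow2_ge_0).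
    apply Rle_trans with (Rpower nr (- (1/8)) ^ 4). apply pow_incr. split; auto; apply Rabs_pos.
    rewrite <- Rpower_pow by auto. rewrite Rpower_mult. apply Req_le. f_equal. simpl. field. }
  set (t := x ^ 2) in *.
  assert (Ht0 : 0 <= t) by (unfold t; apply pow2_ge_0).
  assert (Ht2 : t ^ 2 = x ^ 4) by (unfold t; ring).
  assert (Hinvsq : / sq <= 1/4) by (unfold Rdiv; rewrite Rmult_1_l; apply Rinv_le_contravar; lra).
  assert (Hinvsq0 : 0 < / sq) by (apply Rinv_0_lt_compat; lra).
  assert (Ht : t <= 1/2) by nra.
  assert (Hs2 : 1414/1000 <= sqrt 2).
  { replace (1414/1000) with (sqrt (1414/1000 * (1414/1000))) by (apply sqrt_square; lra).
    apply sqrt_le_1_alt; lra. }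
  assert (HA : sqrt (24 * nr + 1) <= 4906/1000 * sq).
  { unfold sq. rewrite <- (sqrt_square (4906/1000)) by lra. rewrite <- sqrt_mult_alt by lra.
    apply sqrt_le_1_alt; lra. }
  assert (HA0 : 0 <= sqrt (24 * nr + 1)) by apply sqrt_pos.
  pose proof PI_ub as Hpi. pose proof PI_RGT_0 as Hpi0.
  assert (Hc0 : 0 <= c).
  { unfold c. unfold Rdiv. apply Rmult_le_pos. apply Rmult_le_pos; lra. left; apply Rinv_0_lt_compat; lra. }
  assert (Hc : c <= 401/100 * sq).
  { unfold c. apply Rmult_le_reg_r with (3 * sqrt 2). lra.
    unfold Rdiv. rewrite Rmult_assoc, Rinv_l, Rmult_1_r by lra.
    apply Rle_trans with (3467/1000 * (4906/1000 * sq)).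
    apply Rmult_le_compat; lra. nra. }
  set (M := (2 * N + 5)%nat).
  set (f := fun m => (-1) ^ m * gbinom (1/2) m * x ^ (2 * m)).
  assert (Hf : forall m, f m = d m * t ^ m).
  { intros m. unfold f, d, t. rewrite pow_mult. reflexivity. }
  assert (Hsum : sum_range f 2 M = Q M t - (1 - t/2)).
  { unfold sum_range. replace (S M - 2)%nat with (S (2 * N + 3)) by (unfold M; lia).
    pose proof (sra_aux f (S (2 * N + 3))) as H.
    replace (S (S (2 * N + 3))) with M in H by (unfold M; lia).
    assert (HQ : sum_f_R0 f M = Q M t) by (unfold Q; apply sum_eq; intros; apply Hf).
    rewrite Hf, Hf, d_0, d_1 in H. lra. }
  assert (Hsum0 : sum_range f 2 M <= 0).
  { unfold sum_range. apply sra_nonpos. intros m Hm. rewrite Hf.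
    pose proof (d_le m ltac:(lia)). pose proof (pow_le t m Ht0). nra. }
  assert (Hy : y = c * (Q M t - (1 - t/2))) by (unfold y; fold f; fold M; rewrite Hsum; reflexivity).
  set (s := sqrt (1 - t)).
  assert (Hss : s * s = 1 - t) by (apply sqrt_sqrt; lra).
  assert (Hs7 : 7071/10000 <= s).
  { unfold s. replace (7071/10000) with (sqrt (7071/10000 * (7071/10000))) by (apply sqrt_square; lra).
    apply sqrt_le_1_alt; lra. }
  destruct (r_bounds M t ltac:(unfold M; lia) Ht0 Ht) as [Hr0 Hr1].
  fold s in Hr0, Hr1.
  set (r := Q M t - s) in *.
  assert (HdS : - (2 * INR M - 1) * d M / (2 * (INR M + 1)) = - d (S M)).
  { rewrite (d_rec M). pose proof (pos_INR M). field. lra. }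
  rewrite HdS in Hr1.
  assert (HdSM : - (5/128) <= d (S M)) by (apply d_ge; unfold M; lia).
  assert (HdSle : d (S M) <= 0) by (apply d_le; lia).
  assert (HtM : t ^ S M = (t ^ 2) ^ (N + 3)) by (rewrite <- pow_mult; f_equal; unfold M; lia).
  assert (Ht2b : (t ^ 2) ^ (N + 3) <= (/ sq) ^ (N + 3)).
  { apply pow_incr. split. apply pow_le; auto. rewrite Ht2; auto. }
  assert (Hr2 : r <= 5/64 * (/ sq) ^ (N + 3)).
  { apply Rle_trans with (- d (S M) * t ^ S M / (1 - t)); auto.
    rewrite HtM. assert (0 <= (t ^ 2) ^ (N + 3)) by (apply pow_le; nra).
    apply Rle_trans with (5/128 * (t ^ 2) ^ (N + 3) * 2).
    unfold Rdiv. apply Rmult_le_compat. nra. left; apply Rinv_0_lt_compat; lra.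
    apply Rmult_le_compat_r; lra.
    replace 2 with (/ (1/2)) by field. apply Rinv_le_contravar; lra. nra. }
  assert (Hy0 : y <= 0).
  { unfold y. fold f; fold M. apply Rmult_le_0_l || nra. }
  assert (Hyr : y = - (c * ((1 - t/2 - s) - r))) by (rewrite Hy; unfold r; ring).
  assert (Ha : 1 - t/2 - s = t ^ 2 / (4 * (1 - t/2 + s))).
  { apply Rmult_eq_reg_r with (1 - t/2 + s). 2: lra.
    transitivity (t ^ 2 / 4).
    - replace ((1 - t/2 - s) * (1 - t/2 + s)) with ((1 - t/2)^2 - s * s) by ring. rewrite Hss. field.
    - field. lra. }
  assert (Ha2 : 1 - t/2 - s <= t ^ 2 / 58284 * 10000).
  { rewrite Ha. unfold Rdiv. rewrite Rmult_assoc. apply Rmult_le_compat_l. nra.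
    replace (/ 58284 * 10000) with (/ (58284/10000)) by field. apply Rinv_le_contravar; lra. }
  assert (Ha0 : 0 <= 1 - t/2 - s) by (rewrite Ha; unfold Rdiv; apply Rmult_le_pos; [nra | left; apply Rinv_0_lt_compat; lra]).
  assert (Hyabs : Rabs y <= 7/10 * sq * t ^ 2).
  { rewrite Rabs_left1 by auto. rewrite Hyr, Ropp_involutive.
    apply Rle_trans with (401/100 * sq * (t ^ 2 / 58284 * 10000)).
    assert (0 <= t ^ 2) by nra.
    apply Rle_trans with (c * (t ^ 2 / 58284 * 10000)).
    apply Rmult_le_compat_l; lra.
    apply Rmult_le_compat_r; lra.
    assert (0 <= sq * t ^ 2) by nra. lra. }
  pose proof (BB.exp_rem (N + 1) y Hy0) as HE1.
  replace (S (N + 1)) with (N + 2)%nat in HE1 by lia.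
  assert (Hpow1 : Rpower nr (INR (N + 2) / 2) = sq ^ (N + 2)).
  { replace (INR (N + 2) / 2) with (/ 2 * INR (N + 2)) by field.
    rewrite <- Rpower_mult, Rpower_sqrt by lra. apply Rpower_pow. lra. }
  assert (Hpow2 : Rpower nr (- (INR (N + 2) / 2)) = (/ sq) ^ (N + 2)).
  { rewrite Rpower_Ropp, Hpow1. rewrite pow_inv. reflexivity. }
  assert (Hx48 : x ^ (4 * N + 8) = (t ^ 2) ^ (N + 2)).
  { rewrite Ht2, <- pow_mult. f_equal. lia. }
  exists (exp y - sum_f_R0 (fun j => y ^ j / INR (fact j)) (N + 1)).
  exists (exp (- (c * r)) - 1).
  split; [|split].
  - eapply Rle_trans. exact HE1.
    rewrite Hpow1, Hx48.
    assert (Hf0 : 0 < INR (fact (N + 2))) by apply INR_fact_lt_0.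
    apply Rle_trans with ((7/10 * sq * t ^ 2) ^ (N + 2) / INR (fact (N + 2))).
    unfold Rdiv. apply Rmult_le_compat_r. left; apply Rinv_0_lt_compat; lra.
    apply pow_incr. split. apply Rabs_pos. lra.
    apply Req_le. rewrite !Rpow_mult_distr. field. lra.
  - assert (0 <= c * r) by (apply Rmult_le_pos; auto).
    pose proof (exp_ineq1_le (- (c * r))).
    assert (exp (- (c * r)) <= 1) by (rewrite <- exp_0; destruct (Req_dec (c * r) 0) as [He|He]; [rewrite He, Ropp_0; lra | left; apply exp_increasing; lra]).
    rewrite Rabs_left1 by lra. rewrite Hpow2.
    apply Rle_trans with (c * r). lra.
    apply Rle_trans with (401/100 * sq * (5/64 * (/ sq) ^ (N + 3))).
    apply Rmult_le_compat; lra.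
    replace (N + 3)%nat with (S (N + 2)) by lia. simpl.
    assert (0 <= (/ sq) ^ (N + 2)) by (apply pow_le; lra).
    replace (401 / 100 * sq * (5 / 64 * (/ sq * (/ sq) ^ (N + 2)))) with (401/100 * 5/64 * (sq * / sq) * (/ sq) ^ (N + 2)) by (field; lra).
    rewrite Rinv_r by lra. nra.
  - replace (sum_f_R0 (fun j => y ^ j / INR (fact j)) (N + 1) +
       (exp y - sum_f_R0 (fun j => y ^ j / INR (fact j)) (N + 1))) with (exp y) by ring.
    replace (1 + (exp (- (c * r)) - 1)) with (exp (- (c * r))) by ring.
    rewrite <- !exp_plus. f_equal.
    rewrite sqrt_mult by lra. fold s.
    replace (PI / (3 * sqrt 2) * (s * sqrt (24 * nr + 1))) with (c * s)
      by (unfold c; field; lra).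
    rewrite Hy. unfold r. ring.
Qed.
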